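(* Fix $s\geqslant2$. For $n\geqslant2$ and $k=1,\dots,n$, put $Y_{n,k}=X_{n,s,k}-p_s$. Define \[\overline Y_{n,s}=\overline X_{n,s}-p_s=\frac1n\sum_{i=1}^nY_{n,i},\qquad \overline Z_{n,s}=\frac1{n-1}\,(Y_{n,1}+\dots+Y_{n,n-1}).\] Then $F_{\overline Z_{n,s}}-F_{\overline Y_{n,s}}\to0$ uniformly on $\mathbb R$ as $n\to\infty$, where $F_X$ denotes the distribution function of a random variable $X$. The objects $X_{n,s,i}$, $\overline X_{n,s}$ and $p_s$ are defined in the context.
   Context: Consider the tiling of the plane by regular hexagons of side $1$, called cells. For an integer $s\geqslant2$, fix a cell $O$. Let $M_s$ be the set of all cells lying inside the regular hexagon that is centred at the centre of $O$, has sides of length $s\sqrt3$, and has its sides perpendicular to sides of the cells. The set $M_s$ has $m+1=1+3s(s-1)$ cells. Number the cells other than $O$ as $v_1,\dots,v_m$. Two cells are neighbours if they share a side. A cell of $M_s$ is a boundary cell if it has fewer than six neighbours in $M_s$. For an integer $n\geqslant2$, let $\Omega_{n,s}$ be the set of $n$-tuples $f=(f_1,\dots,f_n)$ of functions $f_i:\{v_1,\dots,v_m\}\to\{0,1\}$ such that $f_1+\dots+f_n\equiv1\pmod 2$ at every cell. Equip $\Omega_{n,s}$ with the uniform probability measure $P(A)=|A|\,2^{-(n-1)m}$. A path from the centre to the boundary is a sequence of pairwise distinct cells $v_{j_1},\dots,v_{j_t}$ with the following properties: - $v_{j_1}$ is a neighbour of $O$; - $v_{j_l}$ and $v_{j_{l+1}}$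 are neighbours for each $l$; - $v_{j_t}$ is a boundary cell. The $i$-th fluid flows from the centre to the boundary for $f$ if there is such a path with $f_i(v_{j_l})=1$ for all $l$. Let $A_{n,s,i}$ be this event and $X_{n,s,i}$ its indicator. Set $\overline X_{n,s}=\frac1n\sum_{i=1}^nX_{n,s,i}$. The probability $P(A_{n,s,i})$ does not depend on $n$ or $i$; denote it by $p_s$. *)

(* Defs.v *)
From HB Require Import structures.
From mathcomp Require Import all_boot all_order all_algebra.
From mathcomp Require Import boolp reals.
Set Implicit Arguments. Unset Strict Implicit. Unset Printing Implicit Defensive.
Import Order.TTheory GRing.Theory Num.Theory.
Local Open Scope ring_scope.

(* Cells of the hexagonal tiling are indexed by axial coordinates (a,b) in Z^2;
   two cells share a side iff their difference is one of
   (+-1,0),(0,+-1),(1,-1),(-1,1), i.e. iff the hex distance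
   max(|a|,|b|,|a+b|) of the difference is 1.  M_s is the set of cells at hex
   distance <= s-1 from O = (0,0) (it has 1+3s(s-1) cells). *)

Definition hexnorm (a b : int) : nat := maxn (absz a) (maxn (absz b) (absz (a + b))).

Section Hex.
Variable s : nat.

(* window of coordinates 0 .. 2s-2, representing a = u - (s-1) *)
Definition side : nat := (s.*2).-1.
Definition coord (u : 'I_side) : int := (u : int) - (s.-1 : int).
Definition in_Ms (x : 'I_side * 'I_side) : bool :=
  (hexnorm (coord x.1) (coord x.2) <= s.-1)%N.
Definition is_cell (x : 'I_side * 'I_side) : bool :=
  in_Ms x && ~~ ((coord x.1 == 0) && (coord x.2 == 0)).

Definition cell := {x : 'I_side * 'I_side | is_cell x}.

Definition ca (c : cell) : int := coord (val c).1.
Definition cb (c : cell) : int := coord (val c).2.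

Definition adj (c d : cell) : bool := hexnorm (ca c - ca d) (cb c - cb d) == 1%N.
Definition adjO (c : cell) : bool := hexnorm (ca c) (cb c) == 1%N.
(* boundary cell: fewer than six neighbours in M_s (M_s includes O) *)
Definition boundary (c : cell) : bool :=
  (#|[set d : cell | adj c d]| + adjO c < 6)%N.
End Hex.

Definition config (n s : nat) := {ffun 'I_n -> {ffun cell s -> bool}}.

Definition Omega (n s : nat) : {set config n s} :=
  [set f : config n s | [forall c : cell s, odd #|[set i : 'I_n | f i c]|]].

Definition flows (n s : nat) (i : 'I_n) (f : config n s) : Prop :=
  exists (c : cell s) (q : seq (cell s)),
    [/\ uniq (c :: q), adjO c, path (@adj s) c q, boundary (last c q)
      & all (fun v => f i v) (c :: q)].

Section Prob.
Variable R : realType.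

Definition prob (n s : nat) (A : config n s -> bool) : R :=
  #|[set f in Omega n s | A f]|%:R / #|Omega n s|%:R.

Definition X (n s : nat) (i : 'I_n) (f : config n s) : R :=
  if `[< flows i f >] then 1 else 0.

(* p_s = P(A_{n,s,i}), which does not depend on n,i; we take n = 2, i = 1 *)
Definition p_s (s : nat) : R := prob (fun f : config 2 s => `[< flows ord0 f >]).

Definition Y (n s : nat) (k : 'I_n) (f : config n s) : R := X k f - p_s s.

Definition Ybar (n s : nat) (f : config n s) : R :=
  (n%:R)^-1 * \sum_(i < n) Y i f.

(* (Y_{n,1} + ... + Y_{n,n-1}) / (n-1); 0-based indices 0 .. n-2 *)
Definition Zbar (n s : nat) (f : config n s) : R :=
  ((n.-1)%:R)^-1 * \sum_(i < n | (i < n.-1)%N) Y i f.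

Definition cdf (n s : nat) (V : config n s -> R) (x : R) : R :=
  prob (fun f => V f <= x).
End Prob.

(* Main.v *)
Require Import Defs.
From HB Require Import structures.
From mathcomp Require Import all_boot all_order all_algebra.
From mathcomp Require Import boolp reals.
From mathcomp Require Import ring lra zify.
Import Order.TTheory GRing.Theory Num.Theory.
Set Implicit Arguments. Unset Strict Implicit. Unset Printing Implicit Defensive.

Definition G s := {ffun cell s -> bool}.
Definition flP s (g : G s) : Prop := exists (c : cell s) (q : seq (cell s)),
    [/\ uniq (c :: q), adjO c, path (@adj s) c q, boundary (last c q)
      & all (fun v => g v) (c :: q)].
Definition flB s (g : G s) : bool := `[< flP g >].

Lemma XE (R : realType) n s (i : 'I_n) (f : config n s) : X R i f = ((flB (f i))%:R)%R.
Proof. by rewrite /X /flB; case: (asboolP _). Qed.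

Lemma cardE' (T : finType) (h : pred T) : #|[set i | h i]| = \sum_i (h i : nat).
Proof.
rewrite -sum1_card big_mkcond /=; apply: eq_bigr => i _; rewrite inE; by case: (h i).
Qed.

Lemma cardS (N : nat) (h : pred 'I_N.+1) :
  #|[set i | h i]| = #|[set j : 'I_N | h (widen_ord (leqnSn N) j)]| + h ord_max.
Proof. by rewrite !cardE' big_ord_recr. Qed.

Section Count.
Variable s : nat.
Definition FlSet : {set G s} := [set g | flB g].
Definition ca := #|FlSet|.
Definition cb := #|~: FlSet|.

Lemma cab : ca + cb = #|G s|.
Proof. by rewrite /ca /cb cardsC. Qed.

Lemma count_g (N k : nat) :
  #|[set g : {ffun 'I_N -> G s} | #|[set i | flB (g i)]| == k]| = 'C(N, k) * ca ^ k * cb ^ (N - k).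
Proof.
rewrite -sum1_card.
rewrite (partition_big (fun g : {ffun 'I_N -> G s} => [set i | flB (g i)]) (fun A => #|A| == k)); last first.
  by move=> g; rewrite inE.
rewrite (eq_bigr (fun A : {set 'I_N} => ca ^ k * cb ^ (N - k))); last first.
  move=> A /eqP hA.
  set F := fun i : 'I_N => [pred g' : G s | flB g' == (i \in A)].
  rewrite (eq_bigl (fun g => g \in family F)); last first.
    move=> g; rewrite inE; apply/andP/familyP => [[_ /eqP eA] i | H].
      by rewrite /F inE -eA inE.
    have eA : [set i | flB (g i)] = A.
      by apply/setP => i; move: (H i); rewrite !inE => /eqP.
    by rewrite eA hA.
  rewrite sum1_card card_family foldrE big_map big_enum /=.
  rewrite (bigID (mem A)) /=.
  rewrite (eq_bigr (fun _ => ca)); last first.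
    move=> i hi; apply: eq_card => g; rewrite /ca /FlSet !inE /= hi.
    by rewrite unfold_in /=; case: (flB g).
  rewrite [X in _ * X](eq_bigr (fun _ => cb)); last first.
    move=> i hi; apply: eq_card => g; rewrite /cb /FlSet !inE /= (negbTE hi).
    by rewrite unfold_in /=; case: (flB g).
  rewrite !prod_nat_const hA.
  congr (_ * cb ^ _).
  have hC := cardsC A; rewrite card_ord in hC.
  have -> : #|(fun i : 'I_N => i \notin A)| = #|~: A|.
    by apply: eq_card => i; rewrite inE unfold_in.
  rewrite -hA; apply: (@addnI #|A|); rewrite hC subnKC //.
  by rewrite -[X in _ <= X]hC leq_addr.
rewrite sum_nat_const mulnA; congr (_ * _ * _).
have := card_draws 'I_N k; rewrite card_ord => <-.
by apply: eq_card => A; rewrite inE unfold_in.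
Qed.

Section Restr.
Variable N : nat.
Definition wd (j : 'I_N) : 'I_N.+1 := widen_ord (leqnSn N) j.
Definition restr (f : config N.+1 s) : {ffun 'I_N -> G s} := [ffun i => f (wd i)].
Definition ext (g : {ffun 'I_N -> G s}) : config N.+1 s :=
  [ffun i => if (insub (val i) : option 'I_N) is Some j then g j
             else [ffun c => ~~ odd #|[set j | g j c]|]].

Lemma ext_wd g j : ext g (wd j) = g j.
Proof. by rewrite ffunE /= valK. Qed.

Lemma restr_ext g : restr (ext g) = g.
Proof. by apply/ffunP => j; rewrite ffunE ext_wd. Qed.

Lemma ext_max g c : ext g ord_max c = ~~ odd #|[set j | g j c]|.
Proof. by rewrite ffunE insubF ?ltnn // ffunE. Qed.

Lemma OmegaE (f : config N.+1 s) : (f \in Omega N.+1 s) =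
  [forall c, odd (#|[set j | f (wd j) c]| + f ord_max c)].
Proof.
rewrite inE; apply: eq_forallb => c; by rewrite cardS.
Qed.

Lemma ext_Omega g : ext g \in Omega N.+1 s.
Proof.
rewrite OmegaE; apply/forallP => c.
have -> : [set j | ext g (wd j) c] = [set j | g j c].
  by apply/setP => j; rewrite !inE ext_wd.
by rewrite ext_max oddD; case: (odd _).
Qed.

Lemma ord_cases (i : 'I_N.+1) : i = ord_max \/ exists j, i = wd j.
Proof.
case: (ltnP i N) => h.
  by right; exists (Ordinal h); apply: val_inj.
left; apply: val_inj => /=; have := ltn_ord i; lia.
Qed.

Lemma restr_inj : {in Omega N.+1 s &, injective restr}.
Proof.
move=> f1 f2 h1 h2 e.
have ew : forall j, f1 (wd j) = f2 (wd j).
  by move=> j; have := congr1 (fun g : {ffun 'I_N -> G s} => g j) e; rewrite !ffunE.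
apply/ffunP => i; case: (ord_cases i) => [->|[j ->]]; last exact: ew.
apply/ffunP => c.
move: h1 h2; rewrite !OmegaE => /forallP /(_ c) h1 /forallP /(_ c) h2.
have ee : [set j | f1 (wd j) c] = [set j | f2 (wd j) c].
  by apply/setP => j; rewrite !inE ew.
move: h1 h2; rewrite ee !oddD.
by case: (odd _); case: (f1 ord_max c); case: (f2 ord_max c).
Qed.

Lemma count_restr (P : pred {ffun 'I_N -> G s}) :
  #|[set f in Omega N.+1 s | P (restr f)]| = #|[set g | P g]|.
Proof.
rewrite -(card_in_imset (f := restr)); last first.
  by move=> f1 f2 /setIdP [h1 _] /setIdP [h2 _]; exact: restr_inj.
congr #|pred_of_set _|.
apply/setP => g; rewrite inE; apply/imsetP/idP.
  by move=> [f]; rewrite inE => /andP [_ hP] ->.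
move=> hP; exists (ext g); last by rewrite restr_ext.
by rewrite inE ext_Omega restr_ext hP.
Qed.
End Restr.
End Count.

Definition T (a b N j : nat) : nat := 'C(N, j) * a ^ j * b ^ (N - j).

Lemma Tstep a b N j : j < N -> T a b N j.+1 * (j.+1 * b) = T a b N j * ((N - j) * a).
Proof.
move=> hj; rewrite /T.
have e : N - j = (N - j.+1).+1 by rewrite subnSK.
transitivity ((j.+1 * 'C(N, j.+1)) * a ^ j.+1 * (b ^ (N - j.+1) * b)).
  by rewrite !mulnA; ring.
rewrite mul_bin_left -expnSr -e expnS. ring.
Qed.

Lemma Tsum a b N : \sum_(j < N.+1) T a b N j = (a + b) ^ N.
Proof.
rewrite addnC expnDn; apply: eq_bigr => j _; rewrite /T; ring.
Qed.

Lemma Twindow a b N k L : k + L <= N -> \sum_(i < L.+1) T a b N (k + i) <= (a + b) ^ N.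
Proof.
move=> h; rewrite -Tsum.
rewrite -(big_mkord xpredT (fun i => T a b N (k + i))) -(big_mkord xpredT (T a b N)).
rewrite (@big_cat_nat _ _ _ k 0 N.+1) //=; last by lia.
rewrite (@big_cat_nat _ _ _ (k + L.+1) k N.+1) //=; try lia.
have -> : \sum_(k <= i < k + L.+1) T a b N i = \sum_(0 <= i < L.+1) T a b N (k + i).
  rewrite -{1}(add0n k) big_addn addKn; apply: eq_bigr => i _; by rewrite addnC.
lia.
Qed.

Lemma Tsym a b N k : k <= N -> T a b N k = T b a N (N - k).
Proof.
move=> h; rewrite /T bin_sub // subKn //; ring.
Qed.
Lemma key (a b N k L j : nat) : 0 < a -> 0 < b -> 0 < L -> k * (a + b) <= N * a ->
  j <= k + L -> j < N -> (2 * L * (L + 1) + 1) * (a + b) ^ 2 <= N * (a * b) ->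
  (2 * L - 1) * (j.+1 * b) <= 2 * L * ((N - j) * a).
Proof.
move=> ha hb hL hk hj hjN HH.
have eP : (N - j) * a + j * a = N * a by rewrite -mulnDl subnK // ltnW.
set P := (N - j) * a in eP *.
set Q := j.+1 * b.
have eQ : Q = j * b + b by rewrite /Q mulSn addnC.
have eL : (2 * L - 1) * Q + Q = 2 * L * Q.
  by rewrite -mulSnr -subSn ?subn1 /= ?muln_gt0 //; lia.
have [hD|hD] := leqP Q P.
  have : 2 * L * Q <= 2 * L * P by exact: leq_mul.
  lia.
set s := a + b.
have hjs : j * s <= N * a + L * s.
  apply: (leq_trans (leq_mul hj (leqnn s))); rewrite mulnDl; exact: leq_add.
have ejs : j * s = j * a + j * b by rewrite /s mulnDr.
have hW : Q - P <= L * s + b by lia.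
have h3 : N * a < j * s + b by lia.
have h3' : (N * a) * b < (j * s + b) * b by rewrite ltn_pmul2r.
have hH : (2 * L * (L + 1) + 1) * (s * s) <= N * a * b 
  by move: HH; rewrite /s expnS expn1 !mulnA.
have hbs : b <= s by rewrite /s leq_addl.
have hbb : b * b <= s * s by exact: leq_mul.
have h4 : 2 * L * (L + 1) * s * s < j * b * s.
  have e1 : (j * s + b) * b = j * b * s + b * b by rewrite mulnDl; ring.
  have e2 : (2 * L * (L + 1) + 1) * (s * s) = 2 * L * (L + 1) * s * s + s * s by ring.
  lia.
have h5 : 2 * L * (L + 1) * s < j * b by rewrite ltn_pmul2r in h4 => //; rewrite /s; lia.
have h6 : 2 * L * (L * s + b) <= 2 * L * (L + 1) * s.
  have h : L * s + b <= (L + 1) * s by rewrite mulnDl mul1n leq_add2l.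
  by have := leq_mul (leqnn (2 * L)) h; rewrite !mulnA.
have h7 : 2 * L * (Q - P) <= 2 * L * (L * s + b) by exact: leq_mul.
have h8 : 2 * L * (Q - P) + 2 * L * P = 2 * L * Q by rewrite -mulnDr subnK // ltnW.
lia.
Qed.

Lemma step2 (a b N k L j : nat) : 0 < a -> 0 < b -> 0 < L -> k * (a + b) <= N * a ->
  j <= k + L -> j < N -> (2 * L * (L + 1) + 1) * (a + b) ^ 2 <= N * (a * b) ->
  (2 * L - 1) * T a b N j <= 2 * L * T a b N j.+1.
Proof.
move=> ha hb hL hk hj hjN HH.
have hk2 := @key a b N k L j ha hb hL hk hj hjN HH.
have hQ : 0 < j.+1 * b by rewrite muln_gt0 hb.
rewrite -(leq_pmul2r hQ).
have e1 : (2 * L - 1) * T a b N j * (j.+1 * b) = T a b N j * ((2 * L - 1) * (j.+1 * b)) by ring.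
have e2 : 2 * L * T a b N j.+1 * (j.+1 * b) = T a b N j * (2 * L * ((N - j) * a)).
  by rewrite -mulnA Tstep //; ring.
by rewrite e1 e2 leq_mul2l hk2 orbT.
Qed.

Lemma kLN (a b N k L : nat) : 0 < a -> 0 < b -> k * (a + b) <= N * a ->
  (2 * L * (L + 1) + 1) * (a + b) ^ 2 <= N * (a * b) -> k + L <= N.
Proof.
move=> ha hb hk HH.
set s := a + b in hk HH.
have hs : 0 < s by rewrite /s addn_gt0 ha.
have h1 : L * s * a <= N * b * a.
  apply: leq_trans _ (_ : N * (a * b) <= _); last by rewrite mulnA mulnAC.
  apply: leq_trans HH; rewrite expnS expn1 mulnA.
  have : L <= 2 * L * (L + 1) + 1 by nia.
  move=> h; apply: leq_mul; first exact: leq_mul.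
  by rewrite /s leq_addr.
have h2 : L * s <= N * b by rewrite -(leq_pmul2r ha).
have h3 : (k + L) * s <= N * s by rewrite mulnDl /s mulnDr; rewrite /s in h2; lia.
by rewrite -(leq_pmul2r hs).
Qed.


Local Open Scope ring_scope.

Lemma anti_right (R : realFieldType) (a b N k L : nat) : (0 < a)%N -> (0 < b)%N -> (0 < L)%N ->
  (k * (a + b) <= N * a)%N -> ((2 * L * (L + 1) + 1) * (a + b) ^ 2 <= N * (a * b))%N ->
  (L.+1)%:R * (T a b N k)%:R <= 2 * ((a + b) ^ N)%:R :> R.
Proof.
move=> ha hb hL hk HH.
have hkL := @kLN a b N k L ha hb hk HH.
set d : R := (2 * L)%:R.
have hd : 0 < d by rewrite /d ltr0n muln_gt0.
have chain : forall i, (i <= L)%N ->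
    (1 - i%:R / d) * (T a b N k)%:R <= (T a b N (k + i))%:R :> R.
  elim=> [|i IH] hi; first by rewrite mul0r subr0 mul1r addn0.
  have hi' : (i <= L)%N by apply: ltnW.
  have hlt : (k + i < k + L)%N by rewrite ltn_add2l.
  have hs := @step2 a b N k L (k + i) ha hb hL hk (leq_add (leqnn k) hi') (leq_trans hlt hkL) HH.
  have hsR : (d - 1) * (T a b N (k + i))%:R <= d * (T a b N (k + i).+1)%:R.
    move: hs; rewrite -(ler_nat R) (natrM R (2 * L - 1)) (natrM R (2 * L)) natrB //.
    by rewrite muln_gt0 hL.
  have IH' := IH hi'.
  rewrite addnS.
  have hT0 : 0 <= (T a b N k)%:R :> R by [].
  have hid : 0 <= i%:R / d :> R by rewrite divr_ge0 // ltW.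
  have hid1 : i%:R / d <= 1 - d^-1 :> R.
    rewrite ler_pdivrMr // mulrBl mul1r mulVf ?gt_eqF //.
    rewrite lerBrDr natr1 /d ler_nat; lia.
  have e : (1 - i.+1%:R / d) = (1 - d^-1) * (1 - i%:R / d) - d^-1 * (i%:R / d).
    rewrite -addn1 natrD mulrDl mul1r; field; by rewrite pnatr_eq0 -lt0n.
  have h2 : (1 - d^-1) * (T a b N (k + i))%:R <= (T a b N (k + i).+1)%:R.
    rewrite -(ler_pM2l hd) mulrA mulrBr mulr1 mulfV ?gt_eqF //.
  have hx : 0 <= 1 - d^-1 by apply: le_trans hid1.
  have h3 := ler_wpM2l hx IH'.
  have h4 : 0 <= d^-1 * (i%:R / d) * (T a b N k)%:R.
    by rewrite !mulr_ge0 // ?invr_ge0 ltW.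
  rewrite e; lra.
have hsum : \sum_(i < L.+1) (T a b N (k + i))%:R <= ((a + b) ^ N)%:R :> R.
  by rewrite -natr_sum ler_nat Twindow.
have hlow : \sum_(i < L.+1) ((T a b N k)%:R / 2) <= \sum_(i < L.+1) (T a b N (k + i))%:R :> R.
  apply: ler_sum => i _; apply: le_trans (chain i _); last by rewrite -ltnS.
  have hi : (i <= L)%N by rewrite -ltnS.
  have hid : i%:R / d <= 1 / 2 :> R.
    have -> : 1 / 2 = L%:R / d :> R by rewrite /d natrM; field; rewrite pnatr_eq0 -lt0n.
    by rewrite ler_pM2r ?invr_gt0 // ler_nat.
  have hT0 : 0 <= (T a b N k)%:R :> R by [].
  have hh : 1 / 2 <= 1 - i%:R / d :> R by lra.
  by have := ler_wpM2r hT0 hh; rewrite mul1r mulrC.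
move: hlow; rewrite sumr_const card_ord -mulr_natl => hlow.
lra.
Qed.

Lemma anti (R : realFieldType) (a b N k L : nat) : (0 < a)%N -> (0 < b)%N -> (0 < L)%N ->
  ((2 * L * (L + 1) + 1) * (a + b) ^ 2 <= N * (a * b))%N ->
  (L.+1)%:R * (T a b N k)%:R <= 2 * ((a + b) ^ N)%:R :> R.
Proof.
move=> ha hb hL HH.
have [hkN|hkN] := ltnP N k.
  by rewrite /T bin_small // !mul0n mulr0 mulr_ge0.
have [hk|hk] := leqP (k * (a + b)) (N * a); first exact: anti_right.
rewrite Tsym // addnC; apply: anti_right => //; first last.
  by rewrite [(b + a)%N]addnC [(b * a)%N]mulnC.
rewrite mulnBl [(b + a)%N]addnC !mulnDr; rewrite mulnDr in hk; lia.
Qed.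

Local Open Scope ring_scope.

Definition cnt N s (f : config N.+1 s) : nat := #|[set j : 'I_N | flB (f (wd j))]|.

Lemma ZE (R : realType) N s (f : config N.+1 s) :
  Zbar R f = (N%:R)^-1 * ((cnt f)%:R - N%:R * p_s R s).
Proof.
rewrite /Zbar /=; congr (_ * _).
rewrite big_mkcond big_ord_recr /= ltnn addr0.
rewrite (eq_bigr (fun i : 'I_N => X R (wd i) f - p_s R s)); last first.
  by move=> i _; rewrite /= ltn_ord.
rewrite sumrB sumr_const card_ord mulr_natl; congr (_ - _).
rewrite /cnt cardE' natr_sum; apply: eq_bigr => i _; by rewrite XE.
Qed.

Lemma YE (R : realType) N s (f : config N.+1 s) :
  Ybar R f = (N.+1%:R)^-1 * ((cnt f)%:R + (flB (f ord_max))%:R - N.+1%:R * p_s R s).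
Proof.
rewrite /Ybar; congr (_ * _).
rewrite /Y sumrB sumr_const card_ord mulr_natl; congr (_ - _).
rewrite big_ord_recr /= XE; congr (_ + _).
rewrite /cnt cardE' natr_sum; apply: eq_bigr => i _; by rewrite XE.
Qed.

Lemma card_Om N s : #|Omega N.+1 s| = ((ca s + cb s) ^ N)%N.
Proof.
have := @count_restr s N (fun _ => true).
move=> e.
have -> : #|Omega N.+1 s| = #|[set f in Omega N.+1 s | (fun _ => true) (restr f)]|.
  by apply: eq_card => f; rewrite !inE andbT.
apply: (eq_trans e); rewrite cab.
have -> : #|[set g : {ffun 'I_N -> G s} | (fun _ => true) g]| = #|{ffun 'I_N -> G s}|.
  by apply: eq_card => g; rewrite inE.
by rewrite card_ffun card_ord.
Qed.

Lemma card_cnt N s k : #|[set f in Omega N.+1 s | cnt f == k]| = T (ca s) (cb s) N k.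
Proof.
have := @count_restr s N (fun g => #|[set i | flB (g i)]| == k).
move=> e; rewrite /T -count_g -e; apply: eq_card => f.
rewrite !inE /cnt; congr (_ && (_ == k)).
by apply: eq_card => i; rewrite !inE ffunE.
Qed.

Lemma degen (R : realType) N s bc (h : forall g : G s, flB g = bc) (hN : (0 < N)%N)
  (f : config N.+1 s) : Zbar R f = Ybar R f.
Proof.
rewrite ZE YE h.
have -> : cnt f = if bc then N else 0%N.
  rewrite /cnt cardE' (eq_bigr (fun _ => (bc : nat))); last by move=> i _; rewrite h.
  by rewrite sum_nat_const card_ord; clear h; case: bc; rewrite ?muln1 ?muln0.
have hN' : N%:R != 0 :> R by rewrite pnatr_eq0 -lt0n.
have hN1 : N.+1%:R != 0 :> R by rewrite pnatr_eq0.
clear h; case: bc => /=; rewrite -?natr1; field; by rewrite ?natr1 hN1 hN'.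
Qed.

Lemma nat_close (R : realType) (c1 c2 : nat) :
  c1%:R < c2%:R + 1 :> R -> c2%:R < c1%:R + 1 :> R -> c1 = c2.
Proof.
by rewrite !natr1 !ltr_nat !ltnS => h1 h2; apply/eqP; rewrite eqn_leq h1 h2.
Qed.

Lemma Zle (R : realType) N s (f : config N.+1 s) x : (0 < N)%N ->
  (Zbar R f <= x) = ((cnt f)%:R <= N%:R * (x + p_s R s)).
Proof.
move=> hN; have hNr : 0 < N%:R :> R by rewrite ltr0n.
rewrite ZE ler_pdivrMl //; apply/idP/idP => h; lra.
Qed.

Lemma Yle (R : realType) N s (f : config N.+1 s) x :
  (Ybar R f <= x) = ((cnt f)%:R + (flB (f ord_max))%:R <= N.+1%:R * (x + p_s R s)).
Proof.
have hNr : 0 < N.+1%:R :> R by rewrite ltr0n.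
rewrite YE ler_pdivrMl //; apply/idP/idP => h; lra.
Qed.

Lemma cnt_le N s (f : config N.+1 s) : (cnt f <= N)%N.
Proof. by have := max_card [set j : 'I_N | flB (f (wd j))]; rewrite card_ord. Qed.

Lemma bound_same N s (D : {set config N.+1 s}) :
  D \subset Omega N.+1 s -> {in D &, forall f1 f2, cnt f1 = cnt f2} ->
  exists k, (#|D| <= T (ca s) (cb s) N k)%N.
Proof.
move=> hD hs; case: (set_0Vmem D) => [->|[f0 hf0]]; first by exists 0%N; rewrite cards0.
exists (cnt f0); rewrite -card_cnt; apply: subset_leq_card; apply/subsetP => f hf.
by rewrite inE (subsetP hD _ hf) (hs _ _ hf hf0) eqxx.
Qed.

Lemma cdf_eq (R : realType) N s x (V W : config N.+1 s -> R) :
  (forall f, V f = W f) -> cdf V x = cdf W x.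
Proof.
move=> h; rewrite /cdf /prob; congr (_%:R / _); apply: eq_card => f.
by rewrite !inE h.
Qed.

Theorem lemma3 (R : realType) (s : nat) (hs : (2 <= s)%N) :
  forall eps : R, 0 < eps ->
  exists N : nat, forall n : nat, (2 <= n)%N -> (N <= n)%N ->
    forall x : R,
      `| cdf (@Zbar R n s) x - cdf (@Ybar R n s) x | < eps.
Proof.
move=> eps he.
have [a0|ha] := posnP (ca s).
  exists 0%N => -[|N] // hn _ x.
  have hc : forall g : G s, flB g = false.
    move=> g; apply/negbTE/negP => hg.
    have : g \in FlSet s by rewrite inE.
    by rewrite (cards0_eq a0) inE.
  by rewrite (cdf_eq x (degen R hc hn)) subrr normr0.
have [b0|hb] := posnP (cb s).
  exists 0%N => -[|N] // hn _ x.
  have hc : forall g : G s, flB g = true.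
    move=> g; case e: (flB g) => //.
    have : g \in ~: FlSet s by rewrite !inE e.
    by rewrite (cards0_eq b0) inE.
  by rewrite (cdf_eq x (degen R hc hn)) subrr normr0.
pose L := (Num.Def.archi_bound (4 / eps)).+1.
have hL : 4 / eps < L%:R.
  have h0 : 0 <= 4 / eps by rewrite divr_ge0 // ltW.
  apply: (lt_le_trans (archi_boundP h0)); by rewrite ler_nat.
have hLe : 4 / (L.+1)%:R < eps.
  rewrite ltr_pdivrMr ?ltr0n //.
  move: hL; rewrite ltr_pdivrMr // -natr1 => h; lra.
pose N0 := ((2 * L * (L + 1) + 1) * (ca s + cb s) ^ 2)%N.
exists N0.+1 => -[|N] // _ hNn x.
have hN0 : (N0 <= N)%N by [].
have HH : (N0 <= N * (ca s * cb s))%N.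
  by apply: (leq_trans hN0); rewrite leq_pmulr // muln_gt0 ha hb.
have hN : (0 < N)%N.
  by apply: leq_trans hN0; rewrite muln_gt0 addn1 expn_gt0 addn_gt0 ha.
have hNr : 0 < N%:R :> R by rewrite ltr0n.
have hT := fun k => @anti R (ca s) (cb s) N k L ha hb isT HH.
pose A := [set f in Omega N.+1 s | Zbar R f <= x].
pose B := [set f in Omega N.+1 s | Ybar R f <= x].
have -> : cdf (@Zbar R N.+1 s) x = #|A|%:R / #|Omega N.+1 s|%:R by [].
have -> : cdf (@Ybar R N.+1 s) x = #|B|%:R / #|Omega N.+1 s|%:R by [].
have hl : forall f : config N.+1 s, (flB (f ord_max))%:R <= 1 :> R.
  by move=> f; case: (flB _).
have hl0 : forall f : config N.+1 s, 0 <= (flB (f ord_max))%:R :> R.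
  by move=> f; case: (flB _).
have [k1 hk1] : exists k, (#|A :\: B| <= T (ca s) (cb s) N k)%N.
  apply: bound_same.
    by apply/subsetP => f /setDP [/setIdP [hf _] _].
  move=> f1 f2 /setDP [/setIdP [h1 z1] n1] /setDP [/setIdP [h2 z2] n2].
  have y1 : ~~ (Ybar R f1 <= x) by apply: contra n1 => hy; apply/setIdP.
  have y2 : ~~ (Ybar R f2 <= x) by apply: contra n2 => hy; apply/setIdP.
  move: z1 z2 y1 y2; rewrite !Zle // !Yle -!ltNge -!natr1 => z1 z2 y1 y2.
  have c1 := ler0n R (cnt f1); have c2 := ler0n R (cnt f2).
  have ht : 0 <= x + p_s R s.
    by rewrite -(pmulr_rge0 _ hNr); apply: le_trans z2.
  have l1 := hl f1; have l2 := hl f2.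
  apply: (nat_close (R := R)); nra.
have [k2 hk2] : exists k, (#|B :\: A| <= T (ca s) (cb s) N k)%N.
  apply: bound_same.
    by apply/subsetP => f /setDP [/setIdP [hf _] _].
  move=> f1 f2 /setDP [/setIdP [h1 z1] n1] /setDP [/setIdP [h2 z2] n2].
  have y1 : ~~ (Zbar R f1 <= x) by apply: contra n1 => hy; apply/setIdP.
  have y2 : ~~ (Zbar R f2 <= x) by apply: contra n2 => hy; apply/setIdP.
  move: z1 z2 y1 y2; rewrite !Yle !Zle // -!ltNge -!natr1 => z1 z2 y1 y2.
  have c1 := ler0n R (cnt f1); have c2 := ler0n R (cnt f2).
  have d1 : (cnt f1)%:R <= N%:R :> R by rewrite ler_nat cnt_le.
  have ht : x + p_s R s < 1.
    by rewrite -(ltr_pM2l hNr) mulr1; apply: lt_le_trans d1.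
  have l1 := hl0 f1; have l2 := hl0 f2.
  apply: (nat_close (R := R)); nra.
rewrite card_Om.
set M := (((ca s + cb s) ^ N)%N)%:R : R.
have hM : 0 < M by rewrite ltr0n expn_gt0 addn_gt0 ha.
rewrite -mulrBl normrM [`|M^-1|]gtr0_norm ?invr_gt0 // ltr_pdivrMr //.
have hd : `|#|A|%:R - #|B|%:R| <= (#|A :\: B|)%:R + (#|B :\: A|)%:R :> R.
  have e1 := cardsID B A; have e2 := cardsID A B; rewrite setIC in e2.
  have p1 := ler0n R #|A :\: B|; have p2 := ler0n R #|B :\: A|.
  rewrite -e1 -e2 !natrD ler_norml; apply/andP; split; lra.
have h1 : (#|A :\: B|)%:R <= (T (ca s) (cb s) N k1)%:R :> R by rewrite ler_nat.
have h2 : (#|B :\: A|)%:R <= (T (ca s) (cb s) N k2)%:R :> R by rewrite ler_nat.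
have t1 := hT k1; have t2 := hT k2.
have hL1 : 0 < L.+1%:R :> R by rewrite ltr0n.
have hLe' : 4 < eps * L.+1%:R by rewrite -ltr_pdivrMr.
move: hd; set u := `|_|; move=> hd.
have hu : L.+1%:R * u <= 4 * M.
  have : L.+1%:R * u <= L.+1%:R * ((T (ca s) (cb s) N k1)%:R + (T (ca s) (cb s) N k2)%:R).
    by rewrite ler_pM2l //; lra.
  lra.
have h4 : 4 * M < eps * L.+1%:R * M by rewrite ltr_pM2r.
have : L.+1%:R * u < L.+1%:R * (eps * M) by lra.
by rewrite ltr_pM2l.
Qed.
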